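(* Let $\alpha,\beta$ be nonzero real numbers and $r,x$ real numbers. For every nonnegative integer $m$, the following identity of formal power series in $t$ holds: $$\sum_{n=0}^{\infty}S_{n+m}(x;\alpha,\beta,r)\frac{t^{n}}{n!}=(1+\alpha t)^{\frac{r-m\alpha}{\alpha}}\exp\left(\frac{x}{\beta}\left[(1+\alpha t)^{\frac{\beta}{\alpha}}-1\right]\right)S_{m}\left(x(1+\alpha t)^{\frac{\beta}{\alpha}};\alpha,\beta,r\right).$$
   Context: For a number $t$ and $\alpha$, the generalised factorial is $(t|\alpha)_n=\prod_{j=0}^{n-1}(t-j\alpha)$ for $n\ge 1$ and $(t|\alpha)_0=1$. For parameters $\alpha,\beta,\gamma$, the generalised Stirling numbers $S(n,k,\alpha,\beta,\gamma)$ ($0\le k\le n$) are defined by the polynomial identity $(t|\alpha)_n=\sum_{k=0}^{n}S(n,k,\alpha,\beta,\gamma)\,(t-\gamma|\beta)_k$ in the variable $t$. The generalised exponential polynomials are $S_n(y;\alpha,\beta,r)=\sum_{k=0}^{n}S(n,k,\alpha,\beta,r)\,y^k$. Here $(1+\alpha t)^{c}$ denotes the formal power series $\sum_{j\ge0}\binom{c}{j}\alpha^j t^j$, and $S_m(x(1+\alpha t)^{\beta/\alpha};\alpha,\beta,r)$ means the polynomial $S_m(\cdot;\alpha,\beta,r)$ evaluated at the power series $x(1+\alpha t)^{\beta/\alpha}$. *)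

(* Defs.v *)
From HB Require Import structures.
From mathcomp Require Import all_boot all_order all_algebra.
From mathcomp Require Import reals.
From Stdlib Require Import ClassicalEpsilon.
Set Implicit Arguments. Unset Strict Implicit. Unset Printing Implicit Defensive.
Import Order.TTheory GRing.Theory Num.Theory.
Local Open Scope ring_scope.

Section Defs.
Variable R : realType.

(* Generalised factorial (t - g | a)_n as a polynomial in t:
   prod_{j<n} (t - g - j a).  With g = 0 this is (t|a)_n. *)
Definition gfact (g a : R) (n : nat) : {poly R} :=
  \prod_(j < n) ('X - (g + j%:R * a)%:P).

(* Generalised Stirling numbers S(n,k,a,b,g): the (unique) coefficients with
   (t|a)_n = sum_{k=0}^n S(n,k) (t-g|b)_k. *)
Definition gstir_coeffs (a b g : R) (n : nat) : nat -> R :=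
  epsilon (inhabits (fun _ : nat => (0 : R)))
    (fun c : nat -> R =>
       gfact 0 a n = \sum_(k < n.+1) c k *: gfact g b k).

Definition gstir (n k : nat) (a b g : R) : R := gstir_coeffs a b g n k.

Definition gexp_poly (n : nat) (y a b r : R) : R :=
  \sum_(k < n.+1) gstir n k a b r * y ^+ k.

Definition fps := nat -> R.

Definition fps_const (c : R) : fps := fun n => if n is 0%N then c else 0.
Definition fps_add (f g : fps) : fps := fun n => f n + g n.
Definition fps_scale (c : R) (f : fps) : fps := fun n => c * f n.
Definition fps_mul (f g : fps) : fps :=
  fun n => \sum_(i < n.+1) f i * g (n - i)%N.
Definition fps_pow (f : fps) (k : nat) : fps := iter k (fps_mul f) (fps_const 1).

(* exp(f) for f with zero constant term: sum_k f^k / k!; the n-th coefficient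
   only involves k <= n since f^k has order >= k. *)
Definition fps_exp (f : fps) : fps :=
  fun n => \sum_(k < n.+1) fps_pow f k n / (k`!)%:R.

Definition gbinom (c : R) (j : nat) : R := (\prod_(i < j) (c - i%:R)) / (j`!)%:R.

(* (1 + a t)^c = sum_j binom(c,j) a^j t^j *)
Definition fps_binom (a c : R) : fps := fun j => gbinom c j * a ^+ j.

Definition fps_gexp_poly (m : nat) (u : fps) (a b r : R) : fps :=
  fun n => \sum_(k < m.+1) gstir m k a b r * fps_pow u k n.

End Defs.

(* Main.v *)
Require Import Defs.
From HB Require Import structures.
From mathcomp Require Import all_boot all_order all_algebra.
From mathcomp Require Import reals boolp.
From mathcomp Require Import ring zify.
From Stdlib Require Import ClassicalEpsilon.
Set Implicit Arguments. Unset Strict Implicit. Unset Printing Implicit Defensive.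
Import Order.TTheory GRing.Theory Num.Theory.
Local Open Scope ring_scope.

Section Ser.
Variable R : realType.
Definition ser := nat -> R.
HB.instance Definition _ := gen_eqMixin ser.
HB.instance Definition _ := gen_choiceMixin ser.

Definition szero : ser := fun _ => 0.
Definition sopp (f : ser) : ser := fun n => - f n.
Definition sadd (f g : ser) : ser := fps_add f g.

Lemma saddA : associative sadd.
Proof. by move=> f g h; apply: funext => n; rewrite /sadd /fps_add addrA. Qed.
Lemma saddC : commutative sadd.
Proof. by move=> f g; apply: funext => n; rewrite /sadd /fps_add addrC. Qed.
Lemma sadd0 : left_id szero sadd.
Proof. by move=> f; apply: funext => n; rewrite /sadd /fps_add add0r. Qed.
Lemma saddN : left_inverse szero sopp sadd.
Proof. by move=> f; apply: funext => n; rewrite /sadd /fps_add /sopp addNr. Qed.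

HB.instance Definition _ := GRing.isZmodule.Build ser saddA saddC sadd0 saddN.

Definition tr (n : nat) (f : ser) : {poly R} := \poly_(i < n.+1) f i.

Lemma coefM_low (p p' q q' : {poly R}) n :
  (forall i, (i <= n)%N -> p`_i = p'`_i) -> (forall i, (i <= n)%N -> q`_i = q'`_i) ->
  (p * q)`_n = (p' * q')`_n.
Proof.
move=> Hp Hq; rewrite !coefM; apply: eq_bigr => i _.
by rewrite Hp ?Hq // ?leq_subr // -ltnS.
Qed.

Lemma cm (f g : ser) n : fps_mul f g n = (tr n f * tr n g)`_n.
Proof.
rewrite coefM /fps_mul; apply: eq_bigr => i _.
by rewrite !coef_poly ltn_ord ltnS leq_subr.
Qed.

Lemma tr_low (f : ser) n k i : (i <= n)%N -> (i <= k)%N -> (tr n f)`_i = (tr k f)`_i.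
Proof. by move=> H1 H2; rewrite !coef_poly !ltnS H1 H2. Qed.

Lemma tr_mul (f g : ser) n i : (i <= n)%N -> (tr n (fps_mul f g))`_i = (tr n f * tr n g)`_i.
Proof.
move=> Hi; rewrite coef_poly ltnS Hi cm; apply: coefM_low => j Hj; by apply: tr_low => //; apply: leq_trans Hj Hi.
Qed.

Definition smul (f g : ser) : ser := fps_mul f g.
Definition sone : ser := fps_const 1.

Lemma smulC : commutative smul.
Proof. by move=> f g; apply: funext => n; rewrite /smul !cm mulrC. Qed.

Lemma smulA : associative smul.
Proof.
move=> f g h; apply: funext => n; rewrite /smul !cm.
rewrite (@coefM_low (tr n f) (tr n f) _ (tr n g * tr n h)) //; last by move=> i; exact: tr_mul.
rewrite (@coefM_low _ (tr n f * tr n g) (tr n h) (tr n h)) //; last by move=> i; exact: tr_mul.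
by rewrite mulrA.
Qed.

Lemma smul1 : left_id sone smul.
Proof.
move=> f; apply: funext => n; rewrite /smul /fps_mul big_ord_recl /= subn0 mul1r.
by rewrite big1 ?addr0 // => i _; rewrite mul0r.
Qed.

Lemma smulDl : left_distributive smul sadd.
Proof.
move=> f g h; apply: funext => n; rewrite /smul /sadd /fps_add /fps_mul -big_split /=.
by apply: eq_bigr => i _; rewrite mulrDl.
Qed.

Lemma sone_neq0 : sone != szero.
Proof.
apply/negP => /eqP H; have := congr1 (fun f => f 0%N) H.
by rewrite /sone /szero /= => /eqP; rewrite oner_eq0.
Qed.

HB.instance Definition _ := GRing.Zmodule_isComNzRing.Build ser smulA smulC smul1 smulDl sone_neq0.



Definition sc (c : R) : ser := fps_const c.

Lemma addE (f g : ser) n : (f + g) n = f n + g n. Proof. by []. Qed.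
Lemma oppE (f : ser) n : (- f) n = - f n. Proof. by []. Qed.
Lemma subE (f g : ser) n : (f - g) n = f n - g n. Proof. by []. Qed.
Lemma zeroE n : (0 : ser) n = 0. Proof. by []. Qed.
Lemma mulE (f g : ser) n : (f * g) n = \sum_(i < n.+1) f i * g (n - i)%N. Proof. by []. Qed.
Lemma oneE n : (1 : ser) n = (if n is 0 then 1 else 0). Proof. by []. Qed.

Lemma sum_apply I (s : seq I) (P : pred I) (F : I -> ser) n :
  (\sum_(i <- s | P i) F i) n = \sum_(i <- s | P i) F i n.
Proof. by apply: (big_morph (fun f : ser => f n) (id1 := 0) (op1 := +%R)). Qed.

Lemma mul_scl c (f : ser) n : (sc c * f) n = c * f n.
Proof.
rewrite mulE big_ord_recl subn0 big1 ?addr0 // => i _.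
by rewrite /sc /fps_const /= mul0r.
Qed.

Lemma ev_mul (f g : ser) : (f * g) 0%N = f 0%N * g 0%N.
Proof. by rewrite mulE big_ord_recl big_ord0 addr0. Qed.

Lemma ev_pow (f : ser) k : (f ^+ k) 0%N = f 0%N ^+ k.
Proof. elim: k => [|k IH]; first by rewrite !expr0. by rewrite !exprS ev_mul IH. Qed.

Lemma scD a b : sc (a + b) = sc a + sc b.
Proof. by apply: funext => -[|n]; rewrite addE /sc /fps_const ?addr0. Qed.
Lemma scM a b : sc (a * b) = sc a * sc b.
Proof. by apply: funext => -[|n]; rewrite mul_scl /sc /fps_const ?mulr0. Qed.
Lemma sc1 : sc 1 = 1. Proof. by []. Qed.
Lemma sc0 : sc 0 = 0. Proof. by apply: funext => -[|n]. Qed.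
Lemma scN a : sc (- a) = - sc a.
Proof. by apply: funext => -[|n]; rewrite oppE /sc /fps_const ?oppr0. Qed.
Lemma scB a b : sc (a - b) = sc a - sc b.
Proof. by rewrite scD scN. Qed.
Lemma sc_nat k : sc k%:R = k%:R.
Proof. elim: k => [|k IH]; first exact: sc0. by rewrite -addn1 !natrD scD IH. Qed.

Definition sD (f : ser) : ser := fun n => n.+1%:R * f n.+1.

Lemma sD_add f g : sD (f + g) = sD f + sD g.
Proof. by apply: funext => n; rewrite /sD !addE mulrDr. Qed.
Lemma sD_opp f : sD (- f) = - sD f.
Proof. by apply: funext => n; rewrite /sD !oppE mulrN. Qed.
Lemma sD_sc c : sD (sc c) = 0.
Proof. by apply: funext => n; rewrite /sD /sc /fps_const mulr0. Qed.
Lemma sD1 : sD 1 = 0. Proof. exact: sD_sc. Qed.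

Lemma sD_mul f g : sD (f * g) = sD f * g + f * sD g.
Proof.
apply: funext => n; rewrite addE /sD /=; change ((f * g) n.+1) with (fps_mul f g n.+1); rewrite cm.
rewrite mulr_natl -coef_deriv derivM coefD /GRing.mul /= /smul !cm.
congr (_ + _); apply: coefM_low => j Hj; rewrite ?coef_deriv !coef_poly ?ltnS ?Hj ?(leq_trans Hj) //.
- by symmetry; apply: mulr_natl.
- by symmetry; apply: mulr_natl.
Qed.

Definition sL (a : R) : ser := fun n => if n is 0 then 1 else if n is 1 then a else 0.

Lemma sL0 a h : (sL a * h) 0%N = h 0%N.
Proof. by rewrite ev_mul mul1r. Qed.
Lemma sLS a h n : (sL a * h) n.+1 = h n.+1 + a * h n.
Proof.
rewrite mulE big_ord_recl big_ord_recl /= subn0 subSS subn0 mul1r big1 ?addr0 // => i _.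
by rewrite mul0r.
Qed.

Lemma sL_inj a f g : sL a * f = sL a * g -> f = g.
Proof.
move=> H; apply: funext => n; elim: n => [|n IH].
  by have := congr1 (fun h : ser => h 0%N) H; rewrite !sL0.
have := congr1 (fun h : ser => h n.+1) H; rewrite !sLS IH.
by move/addIr.
Qed.


Lemma fact_neq0 n : (n`!)%:R != 0 :> R.
Proof. by rewrite pnatr_eq0 -lt0n fact_gt0. Qed.
Lemma natS_neq0 n : (n.+1)%:R != 0 :> R.
Proof. by rewrite pnatr_eq0. Qed.

Lemma gb0 (c : R) : gbinom c 0 = 1.
Proof. by rewrite /gbinom big_ord0 fact0 divr1. Qed.

Lemma gbS (c : R) n : gbinom c n.+1 * n.+1%:R = gbinom c n * (c - n%:R).
Proof.
rewrite /gbinom big_ord_recr /= factS natrM.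
have := fact_neq0 n; have := natS_neq0 n; move: (n.+1%:R : R) (n`!%:R : R) => u v hu hv.
by field; apply/andP.
Qed.

Lemma gb1 (c : R) : gbinom c 1 = c.
Proof. by have := gbS c 0; rewrite gb0 mulr1 subr0 mul1r. Qed.

Lemma gbP (c : R) n : gbinom (c - 1) n.+1 + gbinom (c - 1) n = gbinom c n.+1.
Proof.
rewrite /gbinom big_ord_recr big_ord_recl /= factS natrM.
have -> : \prod_(i < n) (c - (bump 0 i)%:R) = \prod_(i < n) (c - 1 - i%:R).
  by apply: eq_bigr => i _; rewrite /bump /= add1n -addn1 natrD; ring.
move: (\prod_(i < n) (c - 1 - i%:R)) => P.
have := fact_neq0 n; have := natS_neq0 n; rewrite -addn1 natrD; move: (n%:R : R) (n`!%:R : R) => u v hu hv.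
rewrite /bump /= ?subr0; field; apply/andP; split=> //.
Qed.


Definition B (a c : R) : ser := fps_binom a c.

Lemma B0 a c : B a c 0%N = 1.
Proof. by rewrite /B /fps_binom gb0 expr0 mulr1. Qed.

Lemma LDB a c : sL a * sD (B a c) = sc (c * a) * B a c.
Proof.
apply: funext => -[|n].
  by rewrite sL0 mul_scl /sD /B /fps_binom gb1 gb0 expr1 expr0; ring.
rewrite sLS mul_scl /sD /B /fps_binom.
have H := gbS c n.+1.
rewrite mulrA [_ * gbinom c _]mulrC H !exprS -addn1 natrD; ring.
Qed.

Lemma LB a c : sL a * B a (c - 1) = B a c.
Proof.
apply: funext => -[|n]; first by rewrite sL0 !B0.
rewrite sLS /B /fps_binom -[gbinom c n.+1]gbP exprS; ring.
Qed.


Lemma pow_eq (F : ser) k : fps_pow F k = F ^+ k.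
Proof.
elim: k => [|k IH]; first by rewrite expr0.
by rewrite exprS -IH.
Qed.

Lemma pow_low (F : ser) k n : F 0%N = 0 -> (n < k)%N -> (F ^+ k) n = 0.
Proof.
move=> F0; elim: k n => [//|k IH] n Hn.
rewrite exprS mulE big1 // => -[[|i] Hi] _ /=; first by rewrite F0 mul0r.
rewrite IH ?mulr0 //; lia.
Qed.

Lemma mulrnE (f : ser) m n : (f *+ m) n = f n *+ m.
Proof. by elim: m => [|m IH]; rewrite ?mulr0n // !mulrS addE IH. Qed.

Lemma sD_pow (F : ser) k : sD (F ^+ k.+1) = F ^+ k * sD F *+ k.+1.
Proof.
elim: k => [|k IH]; first by rewrite expr1 expr0 mul1r.
rewrite exprS sD_mul IH exprS; ring.
Qed.

Lemma exp_wide (F : ser) n N : F 0%N = 0 -> (n < N)%N ->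
  fps_exp F n = \sum_(k < N) (F ^+ k) n / (k`!)%:R.
Proof.
move=> F0; elim: N => [//|N IH] HN.
case: (ltnP n N) => Hn.
  by rewrite big_ord_recr /= -IH // pow_low // mul0r addr0.
have -> : N = n by lia.
by apply: eq_bigr => k _; rewrite pow_eq.
Qed.

Lemma sD_exp (F : ser) : F 0%N = 0 -> sD (fps_exp F) = sD F * fps_exp F.
Proof.
move=> F0; apply: funext => n.
have -> : sD (fps_exp F) n = \sum_(k < n.+2) (sD (F ^+ k)) n / (k`!)%:R.
  rewrite /sD (@exp_wide F n.+1 n.+2 F0 (ltnSn _)) mulr_sumr; apply: eq_bigr => k _.
  by rewrite mulrA.
rewrite big_ord_recl /= expr0 sD1 zeroE mul0r add0r.
have -> : \sum_(i < n.+1) sD (F ^+ (bump 0 i)) n / ((bump 0 i)`!)%:R =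
          \sum_(i < n.+1) (F ^+ i * sD F) n / (i`!)%:R.
  apply: eq_bigr => i _; rewrite /bump /= add1n sD_pow mulrnE factS natrM.
  have := fact_neq0 i; have := natS_neq0 i.
  rewrite -[(F ^+ i * sD F) n *+ i.+1]mulr_natr; move: (i.+1%:R : R) (i`!%:R : R) => u v hu hv.
  by field; apply/andP.
rewrite mulrC mulE.
have -> : \sum_(i < n.+1) fps_exp F i * sD F (n - i)%N =
   \sum_(i < n.+1) \sum_(k < n.+1) (F ^+ k) i / (k`!)%:R * sD F (n - i)%N.
  apply: eq_bigr => i _; rewrite (@exp_wide F i n.+1 F0 (ltn_ord i)) mulr_suml //.
rewrite exchange_big /=; apply: eq_bigr => k _.
rewrite mulE mulr_suml; apply: eq_bigr => i _; ring.
Qed.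


Fixpoint sst (a b r : R) (m k : nat) : R :=
  match m with
  | 0 => if k is 0 then 1 else 0
  | m'.+1 => (if k is j.+1 then sst a b r m' j else 0)
             + (r + k%:R * b - m'%:R * a) * sst a b r m' k
  end.

Lemma sst_high a b r m k : (m < k)%N -> sst a b r m k = 0.
Proof.
elim: m k => [|m IH] [|k] //= Hk.
by rewrite !IH ?mulr0 ?addr0 //; lia.
Qed.

Lemma gfactS (g b : R) k : gfact g b k.+1 = gfact g b k * ('X - (g + k%:R * b)%:P).
Proof. by rewrite /gfact big_ord_recr. Qed.

Lemma gfact_monic (g b : R) k : gfact g b k \is monic.
Proof. by apply: monic_prod => i _; exact: monicXsubC. Qed.

Lemma gfact_size (g b : R) k : size (gfact g b k) = k.+1.
Proof.
elim: k => [|k IH]; first by rewrite /gfact big_ord0 size_poly1.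
rewrite gfactS size_Mmonic ?monicXsubC ?IH ?size_XsubC //.
- by rewrite addn2.
- by apply: monic_neq0; exact: gfact_monic.
Qed.

Lemma gfact_coef_top (g b : R) k : (gfact g b k)`_k = 1.
Proof. by have /monicP := gfact_monic g b k; rewrite lead_coefE gfact_size. Qed.

Lemma gfact_coef_high (g b : R) k n : (k < n)%N -> (gfact g b k)`_n = 0.
Proof. by move=> H; rewrite nth_default // gfact_size. Qed.

Lemma uniq_coef (g b : R) n (c d : nat -> R) :
  \sum_(k < n.+1) c k *: gfact g b k = \sum_(k < n.+1) d k *: gfact g b k ->
  forall k, (k <= n)%N -> c k = d k.
Proof.
elim: n => [|n IH] H.
  move=> k; rewrite leqn0 => /eqP ->.
  by move: H; rewrite !big_ord1 /gfact big_ord0 => /(congr1 (fun p : {poly R} => p`_0)); rewrite !coefZ coef1 !mulr1.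
have Htop : forall e : nat -> R, (\sum_(k < n.+2) e k *: gfact g b k)`_n.+1 = e n.+1.
  move=> e; rewrite coef_sum big_ord_recr /= coefZ gfact_coef_top mulr1 big1 ?add0r //.
  by move=> i _; rewrite coefZ gfact_coef_high ?mulr0.
have Hn : c n.+1 = d n.+1 by rewrite -Htop H Htop.
move=> k; rewrite leq_eqVlt => /orP [/eqP -> //|]; rewrite ltnS.
apply: IH; move: H; rewrite !big_ord_recr /= Hn; exact: addIr.
Qed.

Lemma sst_ok (a b r : R) m :
  gfact 0 a m = \sum_(k < m.+1) sst a b r m k *: gfact r b k.
Proof.
elim: m => [|m IH].
  by rewrite big_ord_recr big_ord0 /= add0r scale1r /gfact !big_ord0.
rewrite gfactS IH mulr_suml.
have E : forall k : nat, sst a b r m k *: gfact r b k * ('X - (0 + m%:R * a)%:P) =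
   sst a b r m k *: gfact r b k.+1 + ((r + k%:R * b - m%:R * a) * sst a b r m k) *: gfact r b k.
  move=> k; rewrite gfactS -!mul_polyC polyCM.
  have -> : r + k%:R * b - m%:R * a = (r + k%:R * b) - (0 + m%:R * a) by rewrite add0r.
  rewrite polyCB; ring.
under eq_bigr => k _ do rewrite E.
rewrite big_split /=.
under [in RHS]eq_bigr => k _ do rewrite scalerDl.
rewrite big_split /=; congr (_ + _).
  rewrite [in RHS]big_ord_recl /= scale0r add0r.
  by apply: eq_bigr => k _.
by rewrite [in RHS]big_ord_recr /= sst_high // mulr0 scale0r addr0.
Qed.


Lemma gstir_eq (a b r : R) m k : (k <= m)%N -> gstir m k a b r = sst a b r m k.
Proof.
move=> Hk; rewrite /gstir /gstir_coeffs.
set P := (fun c : nat -> R => gfact 0 a m = \sum_(k < m.+1) c k *: gfact r b k).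
have Hex : exists c, P c by exists (sst a b r m); exact: sst_ok.
have H := epsilon_spec (inhabits (fun _ : nat => (0 : R))) P Hex.
apply: (uniq_coef (g := r) (b := b) (n := m)) => //.
by rewrite -H -sst_ok.
Qed.

Definition Pm (a b r : R) m (y : ser) : ser :=
  \sum_(k < m.+1) sc (gstir m k a b r) * y ^+ k.

Lemma Pm_sst a b r m y : Pm a b r m y = \sum_(k < m.+1) sc (sst a b r m k) * y ^+ k.
Proof. by apply: eq_bigr => k _; rewrite gstir_eq // -ltnS. Qed.

Lemma Pm_rec a b r m (y : ser) :
  Pm a b r m.+1 y = (sc (r - m%:R * a) + y) * Pm a b r m y
     + \sum_(k < m.+1) sc (sst a b r m k * (k%:R * b)) * y ^+ k.
Proof.
rewrite !Pm_sst /=.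
under eq_bigr => k _ do rewrite scD mulrDl.
rewrite big_split /= big_ord_recl /= sc0 mul0r add0r.
rewrite [X in _ + X]big_ord_recr /= sst_high // mulr0 sc0 mul0r addr0.
rewrite mulrDl !mulr_sumr -!big_split /=; apply: eq_bigr => k _.
rewrite /bump /= add1n add0n exprS !(scM, scB, scD); ring.
Qed.


Lemma sD_sum I (s : seq I) (P : pred I) (G : I -> ser) :
  sD (\sum_(i <- s | P i) G i) = \sum_(i <- s | P i) sD (G i).
Proof.
apply: (big_morph sD (id1 := 0) (op1 := +%R)); first exact: sD_add.
by apply: funext => n; rewrite /sD zeroE mulr0.
Qed.

Lemma sD_scl c f : sD (sc c * f) = sc c * sD f.
Proof. by rewrite sD_mul sD_sc mul0r add0r. Qed.

Lemma scale_eq c (f : ser) : fps_scale c f = sc c * f.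
Proof. by apply: funext => n; rewrite mul_scl. Qed.

Lemma iter_sD (f : ser) k n : (iter k sD f) n * (n`!)%:R = f (n + k)%N * ((n + k)`!)%:R.
Proof.
elim: k n => [|k IH] n; first by rewrite addn0.
rewrite iterS /sD -addSnnS -IH factS natrM; ring.
Qed.

Section Main.
Variables (a b r x : R).
Hypotheses (ha : a != 0) (hb : b != 0).

Let bb := b / a.
Let y : ser := sc x * B a bb.
Let F : ser := sc (x / b) * (B a bb + sc (-1)).
Let Ex : ser := fps_exp F.
Let cc m := (r - m%:R * a) / a.
Let RHS m : ser := B a (cc m) * Ex * Pm a b r m y.

Lemma F0 : F 0%N = 0.
Proof. by rewrite /F mul_scl addE B0 /sc /fps_const addrN mulr0. Qed.

Lemma bba : bb * a = b.
Proof. by rewrite /bb; field. Qed.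

Lemma LDy : sL a * sD y = sc b * y.
Proof.
rewrite /y sD_scl mulrCA LDB bba; ring.
Qed.

Lemma LDEx : sL a * sD Ex = Ex * y.
Proof.
rewrite /Ex sD_exp ?F0 // /F sD_scl sD_add sD_sc addr0.
have -> : sL a * (sc (x / b) * sD (B a bb) * fps_exp (sc (x / b) * (B a bb + sc (-1)))) =
  sc (x / b) * (sL a * sD (B a bb)) * fps_exp (sc (x / b) * (B a bb + sc (-1))) by ring.
rewrite LDB bba /y mulrA -scM.
have -> : x / b * b = x by field.
ring.
Qed.

Lemma LDpow k : sL a * sD (y ^+ k) = sc (k%:R * b) * y ^+ k.
Proof.
case: k => [|k]; first by rewrite expr0 sD1 mulr0 mul0r sc0 mul0r.
rewrite sD_pow.
have -> : sL a * (y ^+ k * sD y *+ k.+1) = y ^+ k * (sL a * sD y) *+ k.+1 by ring.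
rewrite LDy scM sc_nat exprS; ring.
Qed.

Lemma LDP m : sL a * sD (Pm a b r m y) =
  \sum_(k < m.+1) sc (sst a b r m k * (k%:R * b)) * y ^+ k.
Proof.
rewrite Pm_sst sD_sum mulr_sumr; apply: eq_bigr => k _.
rewrite sD_scl mulrCA LDpow !scM; ring.
Qed.

Lemma step m : sD (RHS m) = RHS m.+1.
Proof.
apply: (@sL_inj a); rewrite /RHS !sD_mul.
have -> : sL a * ((sD (B a (cc m)) * Ex + B a (cc m) * sD Ex) * Pm a b r m y +
      B a (cc m) * Ex * sD (Pm a b r m y)) =
    (sL a * sD (B a (cc m))) * Ex * Pm a b r m y + B a (cc m) * (sL a * sD Ex) * Pm a b r m y
    + B a (cc m) * Ex * (sL a * sD (Pm a b r m y)) by ring.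
rewrite LDB LDEx LDP.
have -> : cc m.+1 = cc m - 1 by rewrite /cc -addn1 natrD; field.
have -> : sL a * (B a (cc m - 1) * Ex * Pm a b r m.+1 y) =
   (sL a * B a (cc m - 1)) * Ex * Pm a b r m.+1 y by ring.
rewrite LB Pm_rec.
have -> : cc m * a = r - m%:R * a by rewrite /cc; field.
ring.
Qed.

Lemma iter_RHS m n : iter n sD (RHS m) = RHS (m + n).
Proof.
elim: n => [|n IH]; first by rewrite addn0.
by rewrite iterS IH step addnS.
Qed.

Lemma RHS0 m : RHS m 0%N = gexp_poly m x a b r.
Proof.
rewrite /RHS !ev_mul B0 mul1r.
have -> : Ex 0%N = 1.
  by rewrite /Ex /fps_exp big_ord1 /= divr1.
rewrite mul1r /Pm sum_apply; apply: eq_bigr => k _.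
rewrite mul_scl ev_pow /y mul_scl B0 mulr1 //.
Qed.

Lemma main_id m : (fun n : nat => gexp_poly (n + m) x a b r / (n`!)%:R) = RHS m.
Proof.
apply: funext => n.
have := iter_sD (RHS m) n 0; rewrite iter_RHS add0n fact0 mulr1 RHS0 addnC => ->.
by rewrite mulfK // fact_neq0.
Qed.

End Main.


Lemma gexp_eq m (u : ser) a b r : fps_gexp_poly m u a b r = Pm a b r m u.
Proof.
apply: funext => n; rewrite /Pm sum_apply; apply: eq_bigr => k _.
by rewrite mul_scl pow_eq.
Qed.

End Ser.

Theorem lemma2 (R : realType) (alpha beta r x : R) (m : nat) :
  alpha != 0 -> beta != 0 ->
  (fun n : nat => gexp_poly (n + m) x alpha beta r / (n`!)%:R)
  = fps_mul
      (fps_mul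
         (fps_binom alpha ((r - m%:R * alpha) / alpha))
         (fps_exp (fps_scale (x / beta)
                    (fps_add (fps_binom alpha (beta / alpha)) (fps_const (-1))))))
      (fps_gexp_poly m (fps_scale x (fps_binom alpha (beta / alpha))) alpha beta r).
Proof.
move=> ha hb; rewrite (main_id r x ha hb m) !scale_eq gexp_eq.
reflexivity.
Qed.
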